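(* For each $n$, let $A$ be the symmetric, hollow, binary adjacency matrix of a random simple undirected graph on $[n]$ whose vertex set is partitioned into known nonempty blocks $\mathcal{B}_1,\dots,\mathcal{B}_{K^*}$; for $1\le\ell,k\le K^*$ let $\mathcal{B}_{\ell,k}=\mathcal{B}_\ell\times\mathcal{B}_k$ if $\ell\ne k$, $\mathcal{B}_{\ell,\ell}=\binom{\mathcal{B}_\ell}{2}$, $n_{\ell,k}=|\mathcal{B}_{\ell,k}|$, and $n_{**}=\min_{\ell,k}n_{\ell,k}$. Let $\Gamma$ be a finite index set and, for each $\gamma\in\Gamma$, $\gamma_B$ a nonempty set of unordered block pairs $\{\ell,k\}$ ($\ell=k$ allowed) such that $\{\gamma_B\}_{\gamma\in\Gamma}$ partitions the $((K^* )^2+K^* )/2$ unordered pairs $\{\ell,k\}$, $1\le \ell\le k\le K^*$; let $n_\gamma=\sum_{\{\ell,k\}\in\gamma_B}n_{\ell,k}$. Assume the null model $H_0$ holds: there are $B^{(0)}_\gamma\in(0,1)$ such that all $A_{v,v'}$ with $(v,v')\in\mathcal{B}_{\ell,k}$, $\{\ell,k\}\in\gamma_B$, are independent $\operatorname{Bern}(B^{(0)}_\gamma)$; write $\mathbb{P}_0$ for its probability and $B^{(1)}_{\ell,k}=B^{(0)}_\gamma$ for $\{\ell,k\}\in\gamma_B$ for the resulting block connection probabilities. Assume there exist $n_0$ and $c_1\in(0,1/2)$ such that for all $n>n_0$ and all pairs $\{\ell,k\}$, $$B^{(1)}_{\ell,k}>\frac{\log n_{\ell,k}}{n_{\ell,k}}\quad\text{and}\quad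 B^{(1)}_{\ell,k}<\tfrac12-c_1.$$ Define $\widehat{B}^{(1)}_{\ell,k}=\frac{1}{n_{\ell,k}}\sum_{(v,v')\in\mathcal{B}_{\ell,k}}A_{v,v'}$, $\widehat{B}^{(0)}_{\gamma}=\frac{1}{n_{\gamma}}\sum_{\{\ell,k\}\in\gamma_B}\sum_{(v,v')\in\mathcal{B}_{\ell,k}}A_{v,v'}$, $$-2\widehat\lambda_T=2\sum_{\gamma\in\Gamma}\sum_{\{\ell,k\}\in\gamma_B}n_{\ell,k}\left[\widehat B^{(1)}_{\ell,k}\log\left(\frac{\widehat B^{(1)}_{\ell,k}(1-\widehat B^{(0)}_\gamma)}{\widehat B^{(0)}_\gamma(1-\widehat B^{(1)}_{\ell,k})}\right)+\log\left(\frac{1-\widehat B^{(1)}_{\ell,k}}{1-\widehat B^{(0)}_\gamma}\right)\right],$$ and $$\widehat\Delta_{T,\mathrm{BIC}}=-2\widehat\lambda_T-\Big(\sum_{\gamma\in\Gamma}(|\gamma_B|-1)\Big)\log\binom{n}{2}.$$ Let $c_2$ be a constant with $0<c_2\leq \frac{1}{16}\left(1-\frac{2|\Gamma|}{(K^* )^2+K^*}\right)$. Then for all $n$ sufficiently large, $$\mathbb{P}_{0}\left[\widehat{\Delta}_{T,\mathrm{BIC}}<0\right]\geq 1-O\left(\exp\left\{-((K^* )^2+K^* )-\frac{c_2\log n_{**}}{2+2\sqrt{c_2}/3}\right\}\right).$$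
   Context: $\widehat\Delta_{T,\mathrm{BIC}}$ is the difference of BIC-penalized (negative twice log) maximized likelihoods between the tied repeated-motif hierarchical SBM (parameters indexed by $\Gamma$) and the full $K^*$-block SBM with the same known block partition; a negative value favors the tied model. The asymptotics are as $n\to\infty$, with the block structure and parameters allowed to depend on $n$. The summands of $-2\widehat\lambda_T$ are $2n_{\ell,k}$ times the Kullback–Leibler divergence between $\operatorname{Bern}(\widehat B^{(1)}_{\ell,k})$ and $\operatorname{Bern}(\widehat B^{(0)}_\gamma)$. *)

(* Defs.v *)
From HB Require Import structures.
From mathcomp Require Import all_boot all_order all_algebra.
From mathcomp Require Import all_classical all_reals all_analysis.
Import Order.TTheory GRing.Theory Num.Theory.
Set Implicit Arguments. Unset Strict Implicit.
Local Open Scope ring_scope.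

Section Model.
Variable R : realType.
(* n vertices, K = K^* blocks, G = index set Gamma *)
Variables (n K : nat) (G : finType).
Variable blk : 'I_n -> 'I_K.          (* block membership: v in B_(blk v) *)
Variable gam : 'I_K -> 'I_K -> G.     (* {l,k} in gamma_B  <->  gam l k = gamma *)

(* unordered vertex pairs {v,v'} represented as (v,v') with v < v' *)
Definition edge := {p : 'I_n * 'I_n | (p.1 < p.2)%N}.
Definition graph := {ffun edge -> bool}.

Definition adj (g : graph) (v v' : 'I_n) : R :=
  match (insub (v, v') : option edge) with
  | Some e => (g e)%:R
  | None => match (insub (v', v) : option edge) with
            | Some e => (g e)%:R
            | None => 0
            end
  end.

Definition blockpairs (l k : 'I_K) : {set 'I_n * 'I_n} :=
  [set p : 'I_n * 'I_n | (blk p.1 == l) && (blk p.2 == k) && ((l != k) || (p.1 < p.2)%N)].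

Definition nlk (l k : 'I_K) : nat := #|blockpairs l k|.

(* n_** = min_{l,k} n_{l,k}; n*n is an upper bound of every n_{l,k}, used as the
   neutral element of the min *)
Definition nstar : nat := \big[minn/(n * n)%N]_(p : 'I_K * 'I_K) nlk p.1 p.2.

Definition Slk (g : graph) (l k : 'I_K) : R :=
  \sum_(p in blockpairs l k) adj g p.1 p.2.

Definition Bhat1 (g : graph) (l k : 'I_K) : R := Slk g l k / (nlk l k)%:R.

(* unordered block pairs {l,k}, represented as (l,k) with l <= k *)
Definition upairs : {set 'I_K * 'I_K} := [set p : 'I_K * 'I_K | (p.1 <= p.2)%N].

Definition gamB (c : G) : {set 'I_K * 'I_K} := [set p in upairs | gam p.1 p.2 == c].

Definition ngam (c : G) : nat := \sum_(p in gamB c) nlk p.1 p.2.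

Definition Bhat0 (g : graph) (c : G) : R :=
  (\sum_(p in gamB c) Slk g p.1 p.2) / (ngam c)%:R.

(* x log(x/y) with the convention 0 log 0 = 0 *)
Definition xlogy (x y : R) : R := if x == 0 then 0 else x * ln (x / y).

Definition klBern (p q : R) : R := xlogy p q + xlogy (1 - p) (1 - q).

Definition m2lambdaT (g : graph) : R :=
  2 * \sum_(c : G) \sum_(p in gamB c)
        (nlk p.1 p.2)%:R * klBern (Bhat1 g p.1 p.2) (Bhat0 g c).

Definition DeltaBIC (g : graph) : R :=
  m2lambdaT g - (\sum_(c : G) ((#|gamB c|)%:R - 1)) * ln ('C(n, 2))%:R.

Definition edgeprob (B0 : G -> R) (e : edge) : R :=
  B0 (gam (blk (val e).1) (blk (val e).2)).

Definition P0 (B0 : G -> R) (E : pred graph) : R :=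
  \sum_(g : graph | E g)
     \prod_(e : edge) (if g e then edgeprob B0 e else 1 - edgeprob B0 e).

End Model.

(* Main.v *)
Require Import Defs.
From HB Require Import structures.
From mathcomp Require Import all_boot all_order all_algebra.
From mathcomp Require Import all_classical all_reals all_analysis.
From mathcomp Require Import ring lra zify.
Import Order.TTheory GRing.Theory Num.Theory.
Local Open Scope ring_scope.

Section Num1.
Variable R : realType.
Implicit Types (a q x y : R) (m S k : nat).

Definition LRv a q m S : R := (a / q) ^+ S * ((1 - a) / (1 - q)) ^+ (m - S).
Definition Zn q m S : R := m%:R * klBern (S%:R / m%:R) q.

Lemma ln_le_sub1 {x} : 0 < x -> ln x <= x - 1.
Proof. move=> x0; have := @le_ln1Dx R (x - 1).
have -> : 1 + (x - 1) = x by rewrite addrC subrK.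
apply; lra. Qed.

Lemma xlogy_ge {x y} : 0 <= x -> 0 < y -> x - y <= xlogy x y.
Proof.
move=> x0 y0; rewrite /xlogy; case: eqP => [->|/eqP xn0]; first lra.
have xp : 0 < x by rewrite lt0r xn0.
have h := ln_le_sub1 (divr_gt0 y0 xp).
rewrite !ln_div ?posrE // in h *.
have -> : x - y = x * (1 - y / x) by field.
by rewrite ler_pM2l //; lra.
Qed.

Lemma kl_ge0 {a y} : 0 <= a <= 1 -> 0 < y < 1 -> 0 <= klBern a y.
Proof.
move=> /andP[a0 a1] /andP[y0 y1]; rewrite /klBern.
have h1 := xlogy_ge a0 y0.
have h2 : 1 - a - (1 - y) <= xlogy (1 - a) (1 - y) by apply: xlogy_ge; lra.
lra.
Qed.

Lemma expR_nln k (z : R) : (k = 0%N \/ 0 < z) -> expR (k%:R * ln z) = z ^+ k.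
Proof.
case=> [->|zp]; first by rewrite mul0r expR0 expr0.
by rewrite expRM_natl lnK.
Qed.

Lemma mxlogy m S y : (S <= m)%N -> 0 < y ->
  m%:R * xlogy (S%:R / m%:R) y = S%:R * ln (S%:R / m%:R / y).
Proof.
move=> Sm y0; rewrite /xlogy; case: eqP => [h|/eqP h].
  rewrite mulr0; case: (posnP S) => [->|Sp]; first by rewrite mul0r.
  have mp : (0 < m)%N by apply: leq_trans Sm.
  move/eqP: h; rewrite mulf_eq0 invr_eq0 !pnatr_eq0; by case/orP => /eqP e; [rewrite e in Sp | rewrite e in mp].
have mp : (0 < m)%N by case: (posnP m) h => // ->; rewrite invr0 mulr0 eqxx.
by rewrite mulrA mulrCA divff ?mulr1 // pnatr_eq0 -lt0n.
Qed.

Lemma expZ q m S : 0 < q < 1 -> (S <= m)%N ->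
  expR (Zn q m S) = LRv (S%:R / m%:R) q m S.
Proof.
move=> /andP[q0 q1] Sm; rewrite /Zn /LRv /klBern.
case: (posnP m) => [m0|mp].
  by move: Sm; rewrite m0 leqn0 => /eqP ->; rewrite mul0r expR0 !expr0 mulr1.
have e1 : 1 - S%:R / m%:R = (m - S)%:R / m%:R :> R.
  by rewrite natrB // mulrBl divff // pnatr_eq0 -lt0n.
rewrite mulrDr mxlogy // e1 mxlogy ?leq_subr //; last lra.
rewrite expRD; congr (_ * _); rewrite expR_nln // -?e1.
- case: (posnP S) => [->|Sp]; [by left|right].
  by apply: divr_gt0 => //; apply: divr_gt0; rewrite ltr0n.
- case: (posnP (m - S)) => [->|Sp]; [by left|right].
  by rewrite e1; apply: divr_gt0; [apply: divr_gt0; rewrite ltr0n|lra].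
Qed.
End Num1.


Arguments LRv {R}. Arguments Zn {R}. Arguments expZ {R}. Arguments kl_ge0 {R a y}.
Arguments xlogy_ge {R x y}. Arguments ln_le_sub1 {R x}. Arguments expR_nln {R}. Arguments mxlogy {R}.
Section Num2.
Variable R : realType.
Implicit Types (a q x y : R) (m S k : nat).

Lemma frac01 {m S} : (S <= m)%N -> 0 <= S%:R / m%:R :> R /\ S%:R / m%:R <= 1 :> R.
Proof.
move=> Sm; split; first by apply: divr_ge0; rewrite ler0n.
case: (posnP m) => [->|mp]; first by rewrite invr0 mulr0 ler01.
by rewrite ler_pdivrMr ?ltr0n // mul1r ler_nat.
Qed.

Lemma LRv_ge0 {a q} m S : 0 <= a <= 1 -> 0 < q < 1 -> 0 <= LRv a q m S.
Proof.
move=> /andP[a0 a1] /andP[q0 q1]; rewrite /LRv.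
apply: mulr_ge0; apply: exprn_ge0; apply: divr_ge0; lra.
Qed.

Lemma Zn_ge0 {q} m S : 0 < q < 1 -> (S <= m)%N -> 0 <= Zn q m S.
Proof.
move=> hq Sm; rewrite /Zn; apply: mulr_ge0; first by rewrite ler0n.
by apply: kl_ge0 => //; case: (frac01 Sm) => -> ->.
Qed.

Lemma LRv_sym a q m S : (S <= m)%N -> LRv a q m S = LRv (1 - a) (1 - q) m (m - S).
Proof.
move=> Sm; rewrite /LRv subKn //.
have -> : 1 - (1 - a) = a by ring.
have -> : 1 - (1 - q) = q by ring.
by rewrite mulrC.
Qed.

Lemma Zn_sym q m S : (S <= m)%N -> Zn q m S = Zn (1 - q) m (m - S).
Proof.
move=> Sm; rewrite /Zn; case: (posnP m) => [->|mp]; first by rewrite !mul0r.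
have e1 : (m - S)%:R / m%:R = 1 - S%:R / m%:R :> R.
  by rewrite natrB // mulrBl divff // pnatr_eq0 -lt0n.
rewrite e1 /klBern.
have -> : 1 - (1 - S%:R / m%:R) = S%:R / m%:R :> R by ring.
have -> : 1 - (1 - q) = q by ring.
by rewrite addrC.
Qed.

Lemma gibbs {a q} m S : 0 <= a <= 1 -> 0 < q < 1 -> (S <= m)%N ->
  LRv a q m S <= LRv (S%:R / m%:R) q m S.
Proof.
move=> ha01 hq Sm; move/andP: (ha01) => [a0 a1].
have [x0 x1] := frac01 Sm.
have hx : (0 <= (S%:R / m%:R : R)) && ((S%:R / m%:R : R) <= 1) by apply/andP.
case: (eqVneq a 0) => [->|an0].
  case: (posnP S) => [S0|Sp].
    by rewrite S0 mul0r.
  rewrite {1}/LRv mul0r expr0n gtn_eqF // mul0r; exact: LRv_ge0.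
case: (eqVneq a 1) => [->|an1].
  case: (posnP (m - S)) => [mS0|mSp].
    have mS : m = S by lia.
    case: (posnP S) => [S0|Sp]; first by rewrite /LRv mS S0 subnn !expr0.
    by rewrite /LRv mS divff ?pnatr_eq0 -?lt0n.
  rewrite {1}/LRv subrr mul0r expr0n gtn_eqF // mulr0; exact: LRv_ge0.
have ha : 0 < a < 1 by rewrite lt0r an0 a0 lt_neqAle an1 a1.
have E : LRv (S%:R / m%:R) q m S = LRv (S%:R / m%:R) a m S * LRv a q m S.
  move: ha hq => /andP[? ?] /andP[? ?].
  have f1 : a != 0 by rewrite gt_eqF.
  have f2 : q != 0 by rewrite gt_eqF.
  have f3 : 1 - a != 0 by rewrite subr_eq0 eq_sym lt_eqF.
  have f4 : 1 - q != 0 by rewrite subr_eq0 eq_sym lt_eqF.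
  rewrite /LRv mulrACA -!exprMn; set x := S%:R / m%:R; congr (_ ^+ _ * _ ^+ _); field; rewrite ?f1 ?f2 ?f3 ?f4 //.
rewrite E -expZ //; apply: ler_peMl; first exact: LRv_ge0.
apply: le_trans (expR_ge1Dx _); rewrite lerDl; exact: Zn_ge0.
Qed.

Lemma LR_mono {a q} m k S : 0 < q < 1 -> q <= a <= 1 -> (k <= S)%N -> (S <= m)%N ->
  LRv a q m k <= LRv a q m S.
Proof.
move=> /andP[q0 q1] /andP[qa a1] kS Sm; rewrite /LRv.
apply: ler_pM.
- apply: exprn_ge0; apply: divr_ge0; lra.
- apply: exprn_ge0; apply: divr_ge0; lra.
- apply: ler_weXn2l => //; rewrite ler_pdivlMr // mul1r //.
- apply: ler_wiXn2l; [apply: divr_ge0; lra| |by apply: leq_sub2l].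
  rewrite ler_pdivrMr ?mul1r; lra.
Qed.

Lemma LR_mono' {a q} m k S : 0 < q < 1 -> 0 <= a <= q -> (S <= k)%N -> (k <= m)%N ->
  LRv a q m k <= LRv a q m S.
Proof.
move=> hq ha Sk km; rewrite (LRv_sym a q _ _ (leq_trans Sk km)) (LRv_sym a q _ _ km).
apply: LR_mono; [lra|lra|by apply: leq_sub2l|by apply: leq_subr].
Qed.
End Num2.


Arguments LRv {R}. Arguments Zn {R}. Arguments expZ {R}. Arguments kl_ge0 {R a y}.
Arguments frac01 {R m S}. Arguments LRv_ge0 {R a q}. Arguments Zn_ge0 {R q}.
Arguments LRv_sym {R}. Arguments Zn_sym {R}. Arguments gibbs {R a q}.
Arguments LR_mono {R a q}.

Section Num3.
Variable R : realType.

Lemma tel_ineq (u v : R) : 1 <= u -> u <= v -> (v - u) / v ^+ 2 <= u^-1 - v^-1.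
Proof.
move=> u1 uv.
have u0 : 0 < u by apply: lt_le_trans ltr01 u1.
have v0 : 0 < v by apply: lt_le_trans u0 uv.
have -> : u^-1 - v^-1 = (v - u) / (u * v) by field; rewrite ?gt_eqF.
apply: ler_wpM2l; first lra.
rewrite lef_pV2 ?posrE ?mulr_gt0 ?exprn_gt0 // expr2 ler_pM2r //.
Qed.

Variable q : R.
Hypothesis hq : 0 < q < 1.
Variable m : nat.

Definition uu k : R := expR (Zn q m k / 2).
Definition up k : bool := (q * m%:R <= k%:R) && (k <= m)%N.
Definition beta k : R :=
  if up k then (if (0 < k)%N && (q * m%:R <= k.-1%:R)
                then (uu k - uu k.-1) / (uu k) ^+ 2 else (uu k)^-1) else 0.

Lemma uu_gt0 k : 0 < uu k. Proof. exact: expR_gt0. Qed.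

Lemma uu_ge1 {k} : (k <= m)%N -> 1 <= uu k.
Proof.
move=> km; apply: le_trans (expR_ge1Dx _); rewrite lerDl.
have := Zn_ge0 m k hq km; lra.
Qed.

Lemma uu_sq k : (k <= m)%N -> uu k ^+ 2 = LRv (k%:R / m%:R) q m k.
Proof.
move=> km; rewrite /uu -expRM_natl -expZ //; congr expR; rewrite mulrC divfK // pnatr_eq0.
Qed.

Lemma uu_mono k : (0 < k)%N -> (k <= m)%N -> q * m%:R <= k.-1%:R -> uu k.-1 <= uu k.
Proof.
move=> k0 km hk.
have mp : (0 < m)%N by apply: leq_trans km.
have k1m : (k.-1 <= m)%N by apply: leq_trans (leq_pred k) km.
have Z : Zn q m k.-1 <= Zn q m k.
  rewrite -ler_expR !expZ //.
  apply: le_trans (gibbs m k _ hq km).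
    apply: LR_mono => //; last exact: leq_pred.
    have [_ ->] := frac01 (R:=R) k1m; rewrite andbT ler_pdivlMr ?ltr0n //.
  by have [-> ->] := frac01 (R:=R) k1m.
rewrite /uu ler_expR; lra.
Qed.

Lemma beta_ge0 k : 0 <= beta k.
Proof.
rewrite /beta; case: ifP => [/andP[_ km]|_] //.
case: ifP => [/andP[k0 hk]|_]; last by rewrite invr_ge0 ltW // uu_gt0.
apply: divr_ge0; last by rewrite exprn_ge0 // ltW // uu_gt0.
by rewrite subr_ge0 uu_mono.
Qed.

Lemma sum_id S : (S <= m)%N -> q * m%:R <= S%:R ->
  \sum_(0 <= k < S.+1) beta k * uu k ^+ 2 = uu S.
Proof.
elim: S => [|S IH] Sm hS.
  rewrite big_nat1 /beta /up hS /= expr2 mulrA mulVf ?mul1r //.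
  by rewrite gt_eqF // uu_gt0.
rewrite big_nat_recr //=.
have u0 := uu_gt0 S.+1.
case: (boolP (q * m%:R <= S%:R)) => h.
  rewrite IH ?(ltnW Sm) // /beta /up hS Sm /= h divfK; first ring.
  by rewrite expf_neq0 // gt_eqF.
rewrite big_nat big1 ?add0r.
  rewrite /beta /up hS Sm /= (negbTE h) expr2 mulrA mulVf ?mul1r //.
  by rewrite gt_eqF.
move=> k /andP[_ kS]; rewrite /beta /up; case: ifP => [/andP[hk _]|_]; last by rewrite mul0r.
exfalso; move/negP: h; apply; apply: le_trans hk _; rewrite ler_nat; lia.
Qed.

Lemma sum_le S : (S <= m)%N ->
  \sum_(0 <= k < S.+1) beta k <= (if q * m%:R <= S%:R then 2 - (uu S)^-1 else 0).
Proof.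
elim: S => [|S IH] Sm.
  rewrite big_nat1 /beta /up; case: (boolP (q * m%:R <= 0%:R)) => h //=.
  have := uu_ge1 Sm; have := uu_gt0 0; move=> u0 u1.
  have : (uu 0)^-1 <= 1 by rewrite invf_le1.
  lra.
rewrite big_nat_recr //=.
have IH' := IH (ltnW Sm).
have u0 := uu_gt0 S.+1; have u1 := uu_ge1 Sm.
have hi : (uu S.+1)^-1 <= 1 by rewrite invf_le1.
case: (boolP (q * m%:R <= S%:R)) => h.
  rewrite h in IH'.
  have h' : q * m%:R <= S.+1%:R by apply: le_trans h _; rewrite ler_nat.
  rewrite h' /beta /up h' Sm /= h.
  have := tel_ineq _ _ (uu_ge1 (ltnW Sm)) (uu_mono S.+1 (ltn0Sn S) Sm h).
  lra.
rewrite (negbTE h) in IH'.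
rewrite /beta /up Sm andbT /= (negbTE h).
case: ifP => _; lra.
Qed.

Lemma sum_beta : \sum_(0 <= k < m.+1) beta k <= 2.
Proof.
have := sum_le m (leqnn m); case: ifP => _ h; apply: le_trans h _; last lra.
have : 0 <= (uu m)^-1 by rewrite invr_ge0 ltW // uu_gt0.
lra.
Qed.

Lemma heart_up S : (S <= m)%N -> q * m%:R <= S%:R ->
  uu S <= \sum_(0 <= k < m.+1) beta k * LRv (k%:R / m%:R) q m S.
Proof.
move=> Sm hS; rewrite -(sum_id S Sm hS).
rewrite (big_cat_nat (leq0n S.+1) (Sm : (S < m.+1)%N)) /=.
have h1 : \sum_(0 <= k < S.+1) beta k * uu k ^+ 2 <= \sum_(0 <= k < S.+1) beta k * LRv (k%:R / m%:R) q m S.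
  rewrite !big_nat; apply: ler_sum => k /andP[_ kS].
  have hb := beta_ge0 k.
  case: (boolP (up k)) => hup; last by rewrite /beta (negbTE hup) !mul0r.
  have km : (k <= m)%N by case/andP: hup.
  apply: (ler_wpM2l hb); rewrite uu_sq //.
  case: (eqVneq k S) => [->|kneS] //.
  have mp : (0 < m)%N by move: kneS kS Sm => /eqP; lia.
  apply: LR_mono => //; try lia.
  have [_ ->] := frac01 (R:=R) km; rewrite andbT ler_pdivlMr ?ltr0n //.
  by case/andP: hup.
apply: le_trans h1 _; rewrite lerDl; rewrite big_nat; apply: sumr_ge0 => k /andP[_ km].
apply: mulr_ge0; first exact: beta_ge0.
have km' : (k <= m)%N by lia.
apply: LRv_ge0 => //; by have [-> ->] := frac01 (R:=R) km'.
Qed.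
End Num3.


Arguments LRv {R}. Arguments Zn {R}. Arguments expZ {R}. Arguments kl_ge0 {R a y}.
Arguments frac01 {R m S}. Arguments LRv_ge0 {R a q}. Arguments Zn_ge0 {R q}.
Arguments LRv_sym {R}. Arguments Zn_sym {R}. Arguments gibbs {R a q}.
Arguments LR_mono {R a q}.
Arguments uu {R}. Arguments up {R}. Arguments beta {R}. Arguments uu_gt0 {R}.
Arguments uu_ge1 {R}. Arguments beta_ge0 {R}. Arguments sum_beta {R}.
Arguments heart_up {R}. Arguments sum_id {R}.

Section Num4.
Variable R : realType.
Variable q : R.
Hypothesis hq : 0 < q < 1.
Variables m M : nat.
Hypothesis hM : (m < M)%N.

Definition alphaJ (j : 'I_M * bool) : R :=
  if j.2 then beta q m j.1 else beta (1 - q) m j.1.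
Definition aJ (j : 'I_M * bool) : R :=
  if j.2 then (j.1)%:R / m%:R else 1 - (j.1)%:R / m%:R.

Lemma ext_sum (F : nat -> R) : (forall k, (m < k)%N -> F k = 0) ->
  \sum_(0 <= k < m.+1) F k = \sum_(i < M) F i.
Proof.
move=> h; rewrite -(big_mkord xpredT F) (big_cat_nat (leq0n m.+1) hM) /=.
rewrite [X in _ + X]big_nat [X in _ + X]big1 ?addr0 // => k /andP[hk _]; exact: h.
Qed.

Lemma beta_out (p : R) k : (m < k)%N -> beta p m k = 0.
Proof. by move=> h; rewrite /beta /up leqNgt h andbF. Qed.

Lemma sumJ (F : 'I_M * bool -> R) :
  \sum_j F j = \sum_(i < M) F (i, true) + \sum_(i < M) F (i, false).
Proof.
rewrite -big_split /=.
transitivity (\sum_(i < M) \sum_(b : bool) F (i, b)); last first.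
  by apply: eq_bigr => i _; rewrite big_bool.
by rewrite pair_big /=; apply: eq_big => // -[i b].
Qed.

Lemma hq' : 0 < 1 - q < 1. Proof. case/andP: hq => h1 h2; apply/andP; split; lra. Qed.

Lemma partT_ge0 S : (S <= m)%N -> 0 <= \sum_(i < M) beta q m i * LRv (i%:R / m%:R) q m S.
Proof.
move=> Sm; apply: sumr_ge0 => i _.
case: (leqP i m) => im; last by rewrite beta_out // mul0r.
apply: mulr_ge0; first exact: beta_ge0.
by apply: LRv_ge0 => //; have [-> ->] := frac01 (R:=R) im.
Qed.

Lemma partF_ge0 S : (S <= m)%N -> 0 <= \sum_(i < M) beta (1 - q) m i * LRv (1 - i%:R / m%:R) q m S.
Proof.
move=> Sm; apply: sumr_ge0 => i _.
case: (leqP i m) => im; last by rewrite beta_out // mul0r.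
apply: mulr_ge0; first exact: (beta_ge0 _ hq').
by apply: LRv_ge0 => //; have [? ?] := frac01 (R:=R) im; lra.
Qed.

Lemma heart2 S : (S <= m)%N ->
  expR (Zn q m S / 2) <= \sum_j alphaJ j * LRv (aJ j) q m S.
Proof.
move=> Sm; rewrite sumJ /alphaJ /aJ /=.
have h1 := partT_ge0 S Sm; have h2 := partF_ge0 S Sm.
case: (boolP (q * m%:R <= S%:R)) => hS.
  have := heart_up q hq m S Sm hS.
  rewrite (ext_sum (fun k => beta q m k * LRv (k%:R / m%:R) q m S)); last first.
    by move=> k hk; rewrite beta_out // mul0r.
  rewrite /uu; lra.
rewrite -ltNge in hS.
have hS' : (1 - q) * m%:R <= (m - S)%:R.
  rewrite natrB //; lra.
have := heart_up (1 - q) hq' m (m - S) (leq_subr S m) hS'.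
rewrite /uu -Zn_sym //.
rewrite (ext_sum (fun k => beta (1 - q) m k * LRv (k%:R / m%:R) (1 - q) m (m - S))); last first.
  by move=> k hk; rewrite beta_out // mul0r.
have -> : \sum_(i < M) beta (1 - q) m i * LRv (i%:R / m%:R) (1 - q) m (m - S)
        = \sum_(i < M) beta (1 - q) m i * LRv (1 - i%:R / m%:R) q m S.
  apply: eq_bigr => i _; rewrite (LRv_sym (1 - i%:R / m%:R) q m S Sm).
  by have -> : 1 - (1 - i%:R / m%:R) = i%:R / m%:R :> R by ring.
lra.
Qed.

Lemma alpha_ge0 j : 0 <= alphaJ j.
Proof. rewrite /alphaJ; case: ifP => _; [exact: beta_ge0 | exact: (beta_ge0 _ hq')]. Qed.

Lemma alpha_sum : \sum_j alphaJ j <= 4.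
Proof.
rewrite sumJ /alphaJ /=.
rewrite -(ext_sum (beta q m)); last by move=> k hk; rewrite beta_out.
rewrite -(ext_sum (beta (1 - q) m)); last by move=> k hk; rewrite beta_out.
have := sum_beta q hq m; have := sum_beta (1 - q) hq' m; lra.
Qed.
End Num4.


Arguments LRv {R}. Arguments Zn {R}.
Arguments alphaJ {R}. Arguments aJ {R}. Arguments heart2 {R}. Arguments alpha_ge0 {R}.
Arguments alpha_sum {R}.

Section Prob.
Variable R : realType.
Variables (E P : finType) (bl : E -> P) (qP : P -> R).
Hypothesis hq : forall p, 0 < qP p < 1.
Variable M : nat.
Hypothesis hM : forall p, (#|[set e | bl e == p]| < M)%N.

Definition Ep p : {set E} := [set e | bl e == p].
Definition mE p := #|Ep p|.
Definition SE (g : {ffun E -> bool}) p := #|Ep p :&: [set e | g e]|.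
Definition wt e (b : bool) : R := if b then qP (bl e) else 1 - qP (bl e).
Definition ww (g : {ffun E -> bool}) : R := \prod_e wt e (g e).
Definition hh p j e (b : bool) : R :=
  if e \in Ep p then (if b then aJ (mE p) M j / qP p else (1 - aJ (mE p) M j) / (1 - qP p))
  else 1.
Definition Fp g p : R :=
  \sum_j alphaJ (qP p) (mE p) M j * LRv (aJ (mE p) M j) (qP p) (mE p) (SE g p).

Lemma factor (H : E -> bool -> R) :
  \sum_(g : {ffun E -> bool}) ww g * \prod_e H e (g e) = \prod_e \sum_b wt e b * H e b.
Proof.
rewrite bigA_distr_bigA; apply: eq_bigr => g _; by rewrite -big_split.
Qed.

Lemma ww_sum : \sum_g ww g = 1.
Proof.
have h := factor (fun _ _ => 1); simpl in h.
transitivity (\sum_(g : {ffun E -> bool}) ww g * \prod_(e : E) (1 : R)).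
  by apply: eq_bigr => g _; rewrite big1 ?mulr1.
rewrite h big1 // => e _; rewrite big_bool /wt /=; ring.
Qed.

Lemma ww_ge0 (g : {ffun E -> bool}) : 0 <= ww g.
Proof.
apply: prodr_ge0 => e _; rewrite /wt; have := hq (bl e); case: (g e) => /andP[? ?]; lra.
Qed.

Lemma SE_le (g : {ffun E -> bool}) p : (SE g p <= mE p)%N.
Proof. by apply: subset_leq_card; apply: subsetIl. Qed.

Lemma prod_hh (g : {ffun E -> bool}) p j :
  \prod_e hh p j e (g e) = LRv (aJ (mE p) M j) (qP p) (mE p) (SE g p).
Proof.
rewrite /hh -big_mkcond /= (bigID (fun e => g e)) /=.
set x := aJ (mE p) M j / qP p; set y := (1 - aJ (mE p) M j) / (1 - qP p).
rewrite [X in X * _](eq_bigr (fun _ => x)); last by move=> e /andP[_ ->].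
rewrite [X in _ * X](eq_bigr (fun _ => y)); last by move=> e /andP[_ /negbTE ->].
rewrite [X in X * _](eq_bigl (mem (Ep p :&: [set e | g e]))); last by move=> e; rewrite !inE.
rewrite [X in _ * X](eq_bigl (mem (Ep p :\: [set e | g e]))); last by move=> e; rewrite !inE andbC.
rewrite !prodr_const /LRv.
have -> : (mE p - SE g p)%N = #|Ep p :\: [set e | g e]|.
  by rewrite /mE /SE -(cardsID [set e | g e] (Ep p)) addKn.
by [].
Qed.

Lemma Fp_ge (g : {ffun E -> bool}) p : expR (Zn (qP p) (mE p) (SE g p) / 2) <= Fp g p.
Proof. exact: heart2 (hq p) _ _ (hM p) _ (SE_le g p). Qed.

Lemma Fp_form (g : {ffun E -> bool}) p : Fp g p = \sum_j alphaJ (qP p) (mE p) M j * \prod_e hh p j e (g e).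
Proof. by apply: eq_bigr => j _; rewrite prod_hh. Qed.

Lemma edge_sum (phi : {ffun P -> 'I_M * bool}) e :
  \sum_b wt e b * \prod_p hh p (phi p) e b = 1.
Proof.
have he : forall b, \prod_p hh p (phi p) e b = hh (bl e) (phi (bl e)) e b.
  move=> b; rewrite (bigD1 (bl e)) //= big1 ?mulr1 // => p /negbTE pne.
  by rewrite /hh /Ep inE eq_sym pne.
rewrite big_bool !he /wt /hh /Ep inE eqxx /=.
have := hq (bl e) => /andP[h1 h2].
field; apply/andP; split; rewrite ?subr_eq0 ?gt_eqF // eq_sym lt_eqF //.
Qed.

Lemma EF : \sum_g ww g * \prod_p Fp g p = \prod_p \sum_j alphaJ (qP p) (mE p) M j.
Proof.
transitivity (\sum_(g : {ffun E -> bool}) ww g * \prod_p \sum_j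
   (alphaJ (qP p) (mE p) M j * \prod_e hh p j e (g e))).
  apply: eq_bigr => g _; congr (_ * _); apply: eq_bigr => p _; exact: Fp_form.
transitivity (\sum_(g : {ffun E -> bool}) \sum_(phi : {ffun P -> 'I_M * bool}) ww g *
   \prod_p (alphaJ (qP p) (mE p) M (phi p) * \prod_e hh p (phi p) e (g e))).
  by apply: eq_bigr => g _; rewrite bigA_distr_bigA big_distrr.
rewrite exchange_big /= [RHS]bigA_distr_bigA; apply: eq_bigr => phi _.
transitivity (\prod_p alphaJ (qP p) (mE p) M (phi p) *
   \sum_(g : {ffun E -> bool}) ww g * \prod_e \prod_p hh p (phi p) e (g e)).
  rewrite big_distrr; apply: eq_bigr => g _; rewrite big_split /= mulrCA.
  by congr (_ * (_ * _)); rewrite exchange_big.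
by rewrite (factor (fun e b => \prod_p hh p (phi p) e b)) [X in _ * X]big1 ?mulr1 // => e _; exact: edge_sum.
Qed.
End Prob.


Arguments LRv {R}. Arguments Zn {R}. Arguments expZ {R}. Arguments kl_ge0 {R a y}.
Arguments frac01 {R m S}. Arguments LRv_ge0 {R a q}. Arguments Zn_ge0 {R q}.
Arguments mxlogy {R}.

Section MLE.
Variable R : realType.

Definition ent (m S : nat) : R :=
  S%:R * ln (S%:R / m%:R) + (m - S)%:R * ln ((m - S)%:R / m%:R).

Lemma nln_div (k : nat) (x y : R) : (k = 0%N \/ 0 < x) -> 0 < y ->
  k%:R * ln (x / y) = k%:R * ln x - k%:R * ln y.
Proof.
case=> [->|xp] yp; first by rewrite !mul0r subrr.
by rewrite ln_div ?posrE // mulrBr.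
Qed.

Lemma LF (y : R) m S : 0 < y < 1 -> (S <= m)%N ->
  Zn y m S = ent m S - S%:R * ln y - (m - S)%:R * ln (1 - y).
Proof.
move=> /andP[y0 y1] Sm; rewrite /Zn /ent /klBern.
case: (posnP m) => [m0|mp].
  by move: Sm; rewrite m0 leqn0 => /eqP ->; rewrite subnn !mulr0n !mul0r !subr0 ?addr0.
have e1 : 1 - S%:R / m%:R = (m - S)%:R / m%:R :> R.
  by rewrite natrB // mulrBl divff // pnatr_eq0 -lt0n.
rewrite mulrDr mxlogy // e1 mxlogy ?leq_subr //; [|by rewrite subr_gt0].
rewrite (nln_div S (S%:R / m%:R) y) //; last first.
  case: (posnP S) => [->|Sp]; [by left|right].
  by apply: divr_gt0; rewrite ltr0n.
rewrite (nln_div (m - S) ((m - S)%:R / m%:R) (1 - y)); last (by rewrite subr_gt0); last first.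
  case: (posnP (m - S)) => [->|Sp]; [by left|right].
  by apply: divr_gt0; rewrite ltr0n.
ring.
Qed.

Lemma kl_self (x : R) : klBern x x = 0.
Proof.
have h : forall z : R, xlogy z z = 0.
  by move=> z; rewrite /xlogy; case: eqP => [//|/eqP zn0]; rewrite divff // ln1 mulr0.
by rewrite /klBern !h addr0.
Qed.

Variables (T : finType) (A : {set T}) (m S : T -> nat).
Hypothesis hS : forall p, (S p <= m p)%N.

Lemma MLE (q : R) : 0 < q < 1 ->
  \sum_(p in A) (m p)%:R * klBern ((S p)%:R / (m p)%:R)
      ((\sum_(p in A) (S p)%:R) / (\sum_(p in A) m p)%N%:R)
  <= \sum_(p in A) Zn q (m p) (S p).
Proof.
move=> hq.
have Z0 : 0 <= \sum_(p in A) Zn q (m p) (S p) by apply: sumr_ge0 => p _; exact: Zn_ge0.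
set Sc := (\sum_(p in A) S p)%N; set mc := (\sum_(p in A) m p)%N.
have Scm : (Sc <= mc)%N by apply: leq_sum.
rewrite -natr_sum -/Sc.
case: (posnP Sc) => [Sc0|Scp].
  rewrite Sc0 mul0r big1 // => p pA.
  have : S p = 0%N.
    move/eqP: Sc0; rewrite /Sc sum_nat_eq0 => /forallP /(_ p); rewrite pA /=.
    by move/eqP.
  by move=> ->; rewrite mul0r kl_self mulr0.
case: (eqVneq Sc mc) => [Scmc|Scnmc].
  have hmp : (0 < mc)%N by rewrite -Scmc.
  rewrite Scmc divff ?pnatr_eq0 -?lt0n // big1 // => p pA.
  have : (m p - S p = 0)%N.
    have hsum : (\sum_(p in A) (m p - S p) + Sc = mc)%N.
      by rewrite /Sc -big_split /=; apply: eq_bigr => i _; rewrite subnK.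
    have : (\sum_(p in A) (m p - S p) == 0)%N.
      by apply/eqP; move: hsum; rewrite Scmc; lia.
    by rewrite sum_nat_eq0 => /forallP /(_ p); rewrite pA /= => /eqP.
  move/eqP; rewrite subn_eq0 => mS; have -> : S p = m p by apply/eqP; rewrite eqn_leq hS.
  case: (posnP (m p)) => [->|mpp]; first by rewrite mul0r.
  by rewrite divff ?pnatr_eq0 -?lt0n // kl_self mulr0.
have mcp : (0 < mc)%N by apply: leq_trans Scm.
set xb := Sc%:R / mc%:R.
have hx : 0 < xb < 1.
  apply/andP; split; first by apply: divr_gt0; rewrite ltr0n.
  rewrite ltr_pdivrMr ?ltr0n // mul1r ltr_nat ltn_neqAle Scnmc //.
have -> : \sum_(p in A) (m p)%:R * klBern ((S p)%:R / (m p)%:R) xb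
        = \sum_(p in A) Zn xb (m p) (S p) by [].
rewrite -subr_ge0 -sumrB.
have -> : \sum_(p in A) (Zn q (m p) (S p) - Zn xb (m p) (S p))
  = \sum_(p in A) ((S p)%:R * (ln xb - ln q) + (m p - S p)%:R * (ln (1 - xb) - ln (1 - q))).
  by apply: eq_bigr => p _; rewrite !LF //; ring.
rewrite big_split /= -!mulr_suml -!natr_sum -/Sc.
have -> : (\sum_(p in A) (m p - S p))%N = (mc - Sc)%N.
  have hsum : (\sum_(p in A) (m p - S p) + Sc = mc)%N.
    by rewrite /Sc -big_split /=; apply: eq_bigr => i _; rewrite subnK.
  lia.
have := Zn_ge0 mc Sc hq Scm; have := kl_self xb.
rewrite (LF q mc Sc hq Scm) => k0.
have : Zn xb mc Sc = 0 by rewrite /Zn -/xb k0 mulr0.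
rewrite (LF xb mc Sc hx Scm); lra.
Qed.
End MLE.


Section Blocks.
Variable R : realType.
Variables (n K : nat) (blk : 'I_n -> 'I_K).

Definition blp (p : 'I_n * 'I_n) : 'I_K * 'I_K :=
  if (blk p.1 <= blk p.2)%N then (blk p.1, blk p.2) else (blk p.2, blk p.1).
Definition bl (e : edge n) : 'I_K * 'I_K := blp (val e).

Lemma sum_edge (F : 'I_n * 'I_n -> R) :
  \sum_(e : edge n) F (val e) = \sum_(p : 'I_n * 'I_n | (p.1 < p.2)%N) F p.
Proof.
case: (leqP n 1) => hn.
  have aux : forall a b : nat, (a < b)%N -> (b < n)%N -> False by move=> a b; lia.
  rewrite !big1 // => [p hp|e _]; exfalso.
    exact: aux hp (ltn_ord p.2).
  exact: aux (valP e) (ltn_ord (val e).2).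
pose p0 : 'I_n * 'I_n := (Ordinal (ltnW hn), Ordinal hn).
have h01 : (p0.1 < p0.2)%N by [].
pose e0 : edge n := exist _ p0 h01.
rewrite (reindex_onto (fun e : edge n => val e) (insubd e0)) /=; last first.
  by move=> p hp; rewrite insubdK.
apply: eq_bigl => e; by rewrite (valP e) valKd eqxx.
Qed.

Lemma adj_sym (g : graph n) v v' : adj R g v v' = adj R g v' v.
Proof.
rewrite /adj; case: insubP => [e1 h1 e1v|h1]; case: insubP => [e2 h2 e2v|h2] //=.
by move: h1 h2 => /= h1 h2; exfalso; move: (ltn_trans h1 h2); rewrite ltnn.
Qed.

Lemma adj_edge (g : graph n) (e : edge n) : adj R g (val e).1 (val e).2 = (g e)%:R.
Proof.
rewrite /adj; have -> : ((val e).1, (val e).2) = val e by case: (val e).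
by rewrite valK.
Qed.

Lemma key_nat (x y a c : nat) (X : R) : (a <= c)%N ->
  (if (x == a) && (y == c) then X else 0) + (if (y == a) && (x == c) && (a != c) then X else 0) =
  (if (if (x <= y)%N then (x == a) && (y == c) else (y == a) && (x == c)) then X else 0).
Proof.
move=> ac; case: (x =P a); case: (y =P c); case: (y =P a); case: (x =P c); case: (a =P c);
  case: leqP; move=> /= *; try (by rewrite ?addr0 ?add0r); exfalso; lia.
Qed.

Definition EpB (p : 'I_K * 'I_K) : {set edge n} := [set e | bl e == p].

Lemma bp_sum (phi : 'I_n -> 'I_n -> R) (sym : forall v v', phi v v' = phi v' v)
  (l k : 'I_K) : (l <= k)%N ->
  \sum_(p in blockpairs blk l k) phi p.1 p.2 = \sum_(e in EpB (l, k)) phi (val e).1 (val e).2.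
Proof.
move=> lk.
rewrite [RHS]big_mkcond /=.
rewrite (eq_bigr (fun e : edge n => (fun p => if blp p == (l, k) then phi p.1 p.2 else 0) (val e))); last first.
  by move=> e _; rewrite /EpB inE.
rewrite (sum_edge (fun p => if blp p == (l, k) then phi p.1 p.2 else 0)) big_mkcond /=.
rewrite (bigID (fun p : 'I_n * 'I_n => (p.1 < p.2)%N)) /=.
rewrite [X in _ + X](bigID (fun p : 'I_n * 'I_n => (p.2 < p.1)%N)) /=.
rewrite [X in _ + (_ + X)]big1 ?addr0; last first.
  move=> p /andP[h1 h2]; rewrite /blockpairs inE.
  have e12 : p.1 = p.2 by apply: val_inj => /=; lia.
  rewrite e12 ltnn orbF; case: ifP => // /andP[/andP[/eqP a /eqP b] c].
  by move: c; rewrite -a -b eqxx.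
set G := fun p : 'I_n * 'I_n => if p \in blockpairs blk l k then phi p.1 p.2 else 0.
rewrite [X in _ + X](reindex_inj (h := fun p : 'I_n * 'I_n => (p.2, p.1))); last first.
  by move=> [a b] [c d] /= [-> ->].
rewrite /= [X in _ + X](eq_bigl (fun p : 'I_n * 'I_n => (p.1 < p.2)%N)); last first.
  move=> p /=; case: (ltngtP p.1 p.2) => //.
rewrite -big_split /=; apply: eq_bigr => p hp.
rewrite /G /blockpairs !inE /= (sym p.2 p.1) /blp.
have hp' : (p.2 < p.1)%N = false by apply/negbTE; rewrite -leqNgt ltnW.
rewrite hp hp' orbT orbF andbT.
rewrite (fun_if (fun q => q == (l, k))) !xpair_eqE.
exact: (key_nat (val (blk p.1)) (val (blk p.2)) (val l) (val k) (phi p.1 p.2) lk).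
Qed.
End Blocks.


Arguments Zn {R}. Arguments Zn_ge0 {R q}.

Section Main.
Variable R : realType.
Variables (n K : nat) (G : finType) (blk : 'I_n -> 'I_K) (gam : 'I_K -> 'I_K -> G) (B0 : G -> R).
Hypothesis gsym : forall l k, gam l k = gam k l.
Hypothesis hB : forall c, 0 < B0 c < 1.

Local Notation E := (edge n).
Local Notation P := ('I_K * 'I_K)%type.
Local Notation blE := (bl n K blk).
Definition qP (p : P) : R := B0 (gam p.1 p.2).
Local Notation M := (#|{: E}|.+1).

Lemma hqP p : 0 < qP p < 1. Proof. exact: hB. Qed.
Lemma hM p : (#|[set e | blE e == p]| < M)%N. Proof. by rewrite ltnS max_card. Qed.

Lemma edgeprob_bl e : edgeprob blk gam B0 e = qP (blE e).
Proof.
by rewrite /edgeprob /qP /blE /bl /blp; case: ifP => //= _; rewrite gsym.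
Qed.

Lemma P0_ww (A : pred (graph n)) :
  P0 blk gam B0 A = \sum_(g | A g) ww R E P blE qP g.
Proof.
apply: eq_bigr => g _; apply: eq_bigr => e _.
by rewrite /wt edgeprob_bl.
Qed.

Lemma EpB_Ep p : EpB n K blk p = Ep E P blE p. Proof. by []. Qed.

Lemma Slk_SE (g : graph n) (l k : 'I_K) : (l <= k)%N ->
  Slk R blk g l k = (SE E P blE g (l, k))%:R.
Proof.
move=> lk; rewrite /Slk (bp_sum R n K blk (adj R g) (adj_sym R n g)) //.
under eq_bigr do rewrite adj_edge.
rewrite (bigID (fun e => g e)) /=.
rewrite [X in _ + X]big1 ?addr0; last by move=> e /andP[_ /negbTE ->].
rewrite (eq_bigr (fun _ => 1)); last by move=> e /andP[_ ->].
rewrite (eq_bigl (mem (EpB n K blk (l, k) :&: [set e | g e]))); last by move=> e; rewrite !inE.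
by rewrite sumr_const.
Qed.

Lemma nlk_mE (l k : 'I_K) : (l <= k)%N -> nlk blk l k = mE E P blE (l, k).
Proof.
move=> lk; apply/eqP; rewrite -(eqr_nat R); apply/eqP.
have := bp_sum R n K blk (fun _ _ => (1 : R)) (fun _ _ => erefl) l k lk.
by rewrite !sumr_const.
Qed.

Definition upairsK : {set P} := upairs K.

Lemma gamB_up c p : p \in gamB gam c -> (p.1 <= p.2)%N /\ gam p.1 p.2 = c.
Proof. by rewrite /gamB !inE => /andP[h /eqP ->]. Qed.

Lemma lambda_bound (g : graph n) :
  m2lambdaT R blk gam g / 2 <= \sum_(p : P) Zn (qP p) (mE E P blE p) (SE E P blE g p).
Proof.
rewrite /m2lambdaT mulrC mulrA mulVf ?mul1r; last by rewrite pnatr_eq0.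
have step1 : forall c : G,
  \sum_(p in gamB gam c) (nlk blk p.1 p.2)%:R * klBern (Bhat1 R blk g p.1 p.2) (Bhat0 R blk gam g c)
  <= \sum_(p in gamB gam c) Zn (qP p) (mE E P blE p) (SE E P blE g p).
  move=> c.
  have e1 : Bhat0 R blk gam g c = (\sum_(p in gamB gam c) (SE E P blE g p)%:R) /
                         (\sum_(p in gamB gam c) mE E P blE p)%N%:R.
    rewrite /Bhat0 /ngam; congr (_ / _%:R).
      by apply: eq_bigr => p /gamB_up [h _]; case: p h => l k h; rewrite Slk_SE.
    by apply: eq_bigr => p /gamB_up [h _]; case: p h => l k h; rewrite nlk_mE.
  rewrite e1.
  have -> : \sum_(p in gamB gam c) (nlk blk p.1 p.2)%:R * klBern (Bhat1 R blk g p.1 p.2)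
        ((\sum_(p0 in gamB gam c) (SE E P blE g p0)%:R) / (\sum_(p0 in gamB gam c) mE E P blE p0)%N%:R)
    = \sum_(p in gamB gam c) (mE E P blE p)%:R * klBern ((SE E P blE g p)%:R / (mE E P blE p)%:R)
        ((\sum_(p0 in gamB gam c) (SE E P blE g p0)%:R) / (\sum_(p0 in gamB gam c) mE E P blE p0)%N%:R).
    apply: eq_bigr => p /gamB_up [h _]; case: p h => l k h /=.
    by rewrite /Bhat1 Slk_SE // nlk_mE.
  have -> : \sum_(p in gamB gam c) Zn (qP p) (mE E P blE p) (SE E P blE g p)
          = \sum_(p in gamB gam c) Zn (B0 c) (mE E P blE p) (SE E P blE g p).
    by apply: eq_bigr => p /gamB_up [_ h]; rewrite /qP h.
  exact: MLE (SE_le E P blE g) (B0 c) (hB c).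
apply: le_trans (ler_sum _ (fun c _ => step1 c)) _.
have Zge : forall p : P, 0 <= Zn (qP p) (mE E P blE p) (SE E P blE g p).
  by move=> p; apply: Zn_ge0 (hqP p) (SE_le E P blE g p).
rewrite (exchange_big_dep xpredT) //=.
apply: ler_sum => p _.
case: (boolP (p \in gamB gam (gam p.1 p.2))) => hp.
  rewrite (bigD1 (gam p.1 p.2)) //= big1 ?addr0 // => c /andP[hc cne].
  by exfalso; move: cne; have [_ ->] := gamB_up _ _ hc; rewrite eqxx.
rewrite big1; first exact: Zge.
by move=> c hc; exfalso; have [_ hc'] := gamB_up _ _ hc; move: hp; rewrite hc' hc.
Qed.
End Main.


Arguments Zn {R}. Arguments Zn_ge0 {R q}. Arguments alpha_sum {R}.

Section Main2.
Variable R : realType.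
Variables (n K : nat) (G : finType) (blk : 'I_n -> 'I_K) (gam : 'I_K -> 'I_K -> G) (B0 : G -> R).
Hypothesis gsym : forall l k, gam l k = gam k l.
Hypothesis hB : forall c, 0 < B0 c < 1.

Local Notation E := (edge n).
Local Notation P := ('I_K * 'I_K)%type.
Local Notation blE := (bl n K blk).
Local Notation qP := (qP R K G gam B0).
Local Notation M := (#|{: E}|.+1).

Lemma prob_bound :
  1 - 4 ^+ (K * K) * expR (- ((\sum_(c : G) ((#|gamB gam c|)%:R - 1)) * ln ('C(n, 2))%:R / 4))
  <= P0 blk gam B0 (fun g => DeltaBIC R blk gam g < 0).
Proof.
set d := \sum_(c : G) ((#|gamB gam c|)%:R - 1).
set T := expR (d * ln ('C(n, 2))%:R / 4).
have T0 : 0 < T by apply: expR_gt0.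
have hq := hqP R K G gam B0 hB.
have Fge := Fp_ge R E P blE qP hq M (hM n K blk).
have Fpos : forall g p, 0 <= Fp R E P blE qP M g p.
  by move=> g p; apply: le_trans (Fge g p); apply: expR_ge0.
rewrite P0_ww //.
have hsplit := ww_sum R E P blE qP.
rewrite (bigID (fun g => DeltaBIC R blk gam g < 0)) /= in hsplit.
set S1 := \sum_(g | DeltaBIC R blk gam g < 0) _ in hsplit *.
set S2 := \sum_(g | ~~ (DeltaBIC R blk gam g < 0)) _ in hsplit.
have key : S2 <= 4 ^+ (K * K) / T.
  have h1 : S2 <= \sum_(g | ~~ (DeltaBIC R blk gam g < 0))
                   ww R E P blE qP g * (\prod_p Fp R E P blE qP M g p / T).
    apply: ler_sum => g hg.
    rewrite -[X in X <= _]mulr1; apply: ler_wpM2l; first exact: ww_ge0.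
    rewrite ler_pdivlMr // mul1r.
    have hd : d * ln ('C(n, 2))%:R <= m2lambdaT R blk gam g.
      by move: hg; rewrite /DeltaBIC -/d -leNgt subr_ge0.
    have hl := lambda_bound R n K G blk gam B0 hB g.
    apply: (le_trans (y := expR (\sum_p (Zn (qP p) (mE E P blE p) (SE E P blE g p) / 2)))).
      rewrite ler_expR -mulr_suml; lra.
    rewrite expR_sum; apply: ler_prod => p _; rewrite expR_ge0 /=; exact: Fge.
  apply: le_trans h1 _.
  apply: (le_trans (y := \sum_g ww R E P blE qP g * (\prod_p Fp R E P blE qP M g p / T))).
    rewrite [X in _ <= X](bigID (fun g => ~~ (DeltaBIC R blk gam g < 0))) /= lerDl.
    apply: sumr_ge0 => g _; apply: mulr_ge0; first exact: ww_ge0.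
    by apply: divr_ge0; [apply: prodr_ge0 => p _; exact: Fpos | exact: ltW].
  under eq_bigr do rewrite mulrA.
  rewrite -mulr_suml EF //; apply: ler_wpM2r; first by rewrite invr_ge0 ltW.
  apply: (le_trans (y := \prod_(p : P) (4 : R))).
    apply: ler_prod => p _; apply/andP; split.
      by apply: sumr_ge0 => j _; apply: alpha_ge0.
    exact: alpha_sum (hq p) _ _ (hM n K blk p).
  by rewrite prodr_const card_prod card_ord.
rewrite -/S1; have -> : S1 = 1 - S2 by rewrite -hsplit; ring.
rewrite expRN -/T; lra.
Qed.
End Main2.


Lemma card_upairs (K : nat) : (#|upairs K| * 2 = K ^ 2 + K)%N.
Proof.
set U := upairs K.
set S := [set p : 'I_K * 'I_K | (p.1 < p.2)%N].
set D := [set p : 'I_K * 'I_K | p.1 == p.2].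
have h1 : (#|U| + #|~: U| = K * K)%N by rewrite cardsC card_prod card_ord.
have h2 : #|~: U| = #|S|.
  have -> : ~: U = [set (p.2, p.1) | p in S].
    apply/setP => -[a b]; rewrite !inE /= -ltnNge; apply/idP/imsetP.
      by move=> h; exists (b, a) => //; rewrite inE.
    by move=> [[c d] hcd [-> ->]]; rewrite inE in hcd.
  by rewrite card_imset // => -[a b] [c d] /= [-> ->].
have h3 : #|D| = K.
  have -> : D = [set (i, i) | i in 'I_K].
    apply/setP => -[a b]; rewrite !inE /=; apply/idP/imsetP.
      by move/eqP => ->; exists b.
    by move=> [i _ [-> ->]].
  by rewrite card_imset ?card_ord // => i j [].
have h4 : #|U| = (#|S| + #|D|)%N.
  rewrite -(cardsID D U).
  have -> : U :&: D = D.
    by apply/setP => -[a b]; rewrite !inE /=; case: (eqVneq a b) => [->|]; rewrite ?leqnn ?andbT ?andbF.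
  have -> : U :\: D = S.
    apply/setP => -[a b]; rewrite !inE /= ltn_neqAle.
    have -> : (a != b) = (nat_of_ord a != nat_of_ord b) by [].
    by rewrite andbC.
  by rewrite addnC.
lia.
Qed.

Lemma sum_gamB (K : nat) (G : finType) (gam : 'I_K -> 'I_K -> G) :
  (\sum_(c : G) #|gamB gam c|)%N = #|upairs K|.
Proof.
rewrite -sum1_card (partition_big (fun p : 'I_K * 'I_K => gam p.1 p.2) xpredT) //=.
apply: eq_bigr => c _; rewrite -sum1_card; apply: eq_bigl => p.
by rewrite /gamB !inE.
Qed.

Lemma nstar_le (n K : nat) (blk : 'I_n -> 'I_K) : (nstar blk <= n * n)%N.
Proof.
rewrite /nstar; elim/big_rec: _ => // i x _ h.
exact: leq_trans (geq_minr _ _) h.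
Qed.

Lemma bin2_ge (n : nat) : (3 <= n)%N -> (n <= 'C(n, 2))%N.
Proof.
case: n => // m hm; rewrite binS bin1.
have : (0 < 'C(m, 2))%N by rewrite bin_gt0; lia.
lia.
Qed.


Theorem theorem2 (R : realType) (K : nat -> nat) (G : nat -> finType)
  (blk : forall n : nat, 'I_n -> 'I_(K n))
  (gam : forall n : nat, 'I_(K n) -> 'I_(K n) -> G n)
  (B0 : forall n : nat, G n -> R)
  (n0 : nat) (c1 c2 : R) :
  (* blocks are nonempty *)
  (forall (n : nat) (l : 'I_(K n)), exists v : 'I_n, blk n v = l) ->
  (* gamma_B is a set of unordered block pairs; each gamma_B nonempty *)
  (forall (n : nat) (l k : 'I_(K n)), gam n l k = gam n k l) ->
  (forall (n : nat) (c : G n), gamB (gam n) c != finset.set0) ->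
  (* null model parameters in (0,1) *)
  (forall (n : nat) (c : G n), 0 < B0 n c < 1) ->
  0 < c1 < 1 / 2 ->
  (forall n : nat, (n0 < n)%N -> forall l k : 'I_(K n),
      ln (nlk (blk n) l k)%:R / (nlk (blk n) l k)%:R < B0 n (gam n l k) /\
      B0 n (gam n l k) < 1 / 2 - c1) ->
  0 < c2 ->
  (forall n : nat, (n0 < n)%N ->
      c2 <= 1 / 16 * (1 - 2 * (#|G n|)%:R / ((K n ^ 2 + K n)%N)%:R)) ->
  exists C : R, exists N : nat, forall n : nat, (N < n)%N ->
    P0 (blk n) (gam n) (B0 n) (fun g => DeltaBIC R (blk n) (gam n) g < 0)
    >= 1 - C * expR (- ((K n ^ 2 + K n)%N)%:R
                     - c2 * ln (nstar (blk n))%:R / (2 + 2 * Num.sqrt c2 / 3)).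
Proof.
move=> _ gsym _ hB _ _ c2p hc2.
exists 1, (maxn (maxn n0 3) (Num.truncn (expR (3 / c2)))) => n hn.
have hn0 : (n0 < n)%N by move: hn; rewrite !gtn_max => /andP[/andP[]].
have hn3 : (3 < n)%N by move: hn; rewrite !gtn_max => /andP[/andP[]].
have hnt : (Num.truncn (expR (3 / c2)) < n)%N by move: hn; rewrite !gtn_max => /andP[].
have hexp : expR (3 / c2) < n%:R.
  apply: lt_le_trans (truncnS_gt _) _; rewrite ler_nat //.
have Kp : (0 < K n)%N.
  have n0' : (0 < n)%N by apply: leq_trans hn3.
  exact: leq_ltn_trans (leq0n _) (ltn_ord (blk n (Ordinal n0'))).
apply: le_trans (prob_bound R n (K n) (G n) (blk n) (gam n) (B0 n) (gsym n) (hB n)).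
rewrite mul1r.
set Kn := K n.
set Pn := #|upairs Kn|.
set L := ln ('C(n, 2))%:R.
set Ls := ln (nstar (blk n))%:R.
set D := 2 + 2 * Num.sqrt c2 / 3.
set d := \sum_(c : G n) ((#|gamB (gam n) c|)%:R - 1).
have cu := card_upairs Kn.
have hd : d = Pn%:R - (#|G n|)%:R.
  rewrite /d sumrB -natr_sum sum_gamB sumr_const //.
have eK : ((Kn ^ 2 + Kn)%N)%:R = Pn%:R * 2 :> R by rewrite -cu natrM.
have Pp : 1 <= Pn%:R :> R.
  rewrite ler1n; move: cu Kp; rewrite -/Kn; lia.
have KK : (Kn * Kn)%:R <= Pn%:R * 2 :> R.
  rewrite -natrM ler_nat; move: cu; rewrite -/Kn; lia.
have ln4 : ln (4 : R) <= 3 by have := @ln_le_sub1 R 4 (ltr0Sn R 3); lra.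
have Hc : 16 * c2 * Pn%:R <= Pn%:R - (#|G n|)%:R.
  have h := hc2 n hn0; rewrite -/Kn eK in h.
  have P0' : Pn%:R != 0 :> R by rewrite gt_eqF // (lt_le_trans ltr01 Pp).
  have e : (1 / 16 : R) * (1 - 2 * (#|G n|)%:R / (Pn%:R * 2)) * Pn%:R = (Pn%:R - (#|G n|)%:R) / 16.
    by field.
  have := ler_wpM2r (ltW (lt_le_trans ltr01 Pp)) h; rewrite e; lra.
have Ln : 3 / c2 <= ln (n%:R : R).
  rewrite -(expRK (3 / c2)) ler_ln ?posrE ?expR_gt0 ?ltW //.
  by rewrite ltr0n; apply: leq_trans hn3.
have LnL : ln (n%:R : R) <= L.
  rewrite ler_ln ?posrE ?ltr0n; last (by rewrite bin_gt0; apply: leq_trans hn3); last by apply: leq_trans hn3.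
  by rewrite ler_nat bin2_ge // ltnW.
have L0 : 0 <= L.
  have : 0 < 3 / c2 by apply: divr_gt0.
  lra.
have cL : 3 <= c2 * L.
  have : c2 * (3 / c2) <= c2 * L by apply: ler_wpM2l; [exact: ltW | lra].
  by rewrite mulrCA divff ?mulr1 // gt_eqF.
have Ls2 : Ls <= L + L.
  rewrite /Ls; case: (posnP (nstar (blk n))) => [->|nsp].
    by rewrite ln0 //; lra.
  rewrite /L.
  have Np : (0 < 'C(n, 2))%N by rewrite bin_gt0; apply: leq_trans hn3.
  rewrite -lnM ?posrE ?ltr0n // -natrM ler_ln ?posrE ?ltr0n ?muln_gt0 ?Np //.
  rewrite ler_nat; apply: leq_trans (nstar_le _ _ (blk n)) _.
  by apply: leq_mul; apply: bin2_ge; apply: ltnW.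
have Ls0 : 0 <= Ls.
  rewrite /Ls; case: (posnP (nstar (blk n))) => [->|nsp]; first by rewrite ln0.
  by apply: ln_ge0; rewrite ler1n.
have D2 : 2 <= D by rewrite /D; have := sqrtr_ge0 c2; lra.
have hD : c2 * Ls / D <= c2 * Ls / 2.
  apply: ler_wpM2l; first by apply: mulr_ge0; lra.
  by rewrite lef_pV2 ?posrE //; lra.
have cLs : c2 * Ls <= c2 * (L + L) by apply: ler_wpM2l; lra.
have dL : 16 * c2 * Pn%:R * L <= d * L by rewrite hd; apply: ler_wpM2r.
have Y3 : Pn%:R * 3 <= Pn%:R * (c2 * L) by apply: ler_wpM2l; lra.
have Y1 : c2 * L <= Pn%:R * (c2 * L).
  have : 0 <= (Pn%:R - 1) * (c2 * L) by apply: mulr_ge0; lra.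
  lra.
have K4 : (Kn * Kn)%:R * ln (4 : R) <= (Kn * Kn)%:R * 3 by apply: ler_wpM2l.
have e4 : (4 : R) ^+ (Kn * Kn) = expR ((Kn * Kn)%:R * ln 4).
  by rewrite expRM_natl lnK // posrE.
rewrite e4 -expRD.
have : expR ((Kn * Kn)%:R * ln 4 + - (d * L / 4))
       <= expR (- ((Kn ^ 2 + Kn)%N)%:R - c2 * Ls / D).
  rewrite ler_expR eK; lra.
lra.
Qed.
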